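(* Let $N\in\mathbb N$, $F=\mathbb Z/N\mathbb Z$, $k\in\mathbb N_0$, and let $\sigma\in G_F$ be a $2k$-block configuration. Then \[4k\le\|\Delta A_F(\sigma)\|_1\le 4k^2,\] and $\|\Delta A_F(\sigma)\|_1$ is a multiple of $4$.
   Context: $G_F=\{-1,1\}^F$, $A_F(\sigma)_f=\sum_{j\in F}\sigma_j\sigma_{j+f}$, $(\Delta h)_f=\frac14(h_{f-1}-2h_f+h_{f+1})$, and $\|h\|_1=\sum_{f\in F}|h_f|$. A configuration $\sigma$ is a $2k$-block configuration if the number of $f\in F$ with $\sigma_f\neq\sigma_{f+1}$ equals $2k$ (equivalently, $\sigma$ is a cyclic translate of $(1)^{m_1}(-1)^{m_2}\cdots(1)^{m_{2k-1}}(-1)^{m_{2k}}$ with all $m_\ell\in\mathbb N$, or $\sigma=\pm\mathbf 1$ when $k=0$). *)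

(* Defs.v *)
From mathcomp Require Import all_boot all_order all_algebra.
Set Implicit Arguments. Unset Strict Implicit. Unset Printing Implicit Defensive.
Import Order.TTheory GRing.Theory Num.Theory.
Local Open Scope ring_scope.

(* F = Z/NZ with N = n.+1 >= 1, represented by 'I_n.+1.
   Functions on F are functions 'I_n.+1 -> R; [cyc h j] evaluates h at the
   class of the natural number j modulo N. *)
Definition cyc (R : Type) (n : nat) (h : 'I_n.+1 -> R) (j : nat) : R :=
  h (inord (j %% n.+1)).

Definition spin_config (n : nat) (sigma : 'I_n.+1 -> int) : Prop :=
  forall i, sigma i = 1 \/ sigma i = -1.

Definition autocorr (n : nat) (sigma : 'I_n.+1 -> int) (f : 'I_n.+1) : int :=
  \sum_(j < n.+1) sigma j * cyc sigma (j + f)%N.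

(* (Delta h)_f = 1/4 (h_{f-1} - 2 h_f + h_{f+1});  f-1 = f + (N-1) mod N *)
Definition discLap (n : nat) (h : 'I_n.+1 -> rat) (f : 'I_n.+1) : rat :=
  (cyc h (f + n)%N - 2 * h f + cyc h f.+1) / 4.

Definition norm1 (n : nat) (h : 'I_n.+1 -> rat) : rat :=
  \sum_(f < n.+1) `|h f|.

Definition num_sign_changes (n : nat) (sigma : 'I_n.+1 -> int) : nat :=
  #|[set f : 'I_n.+1 | sigma f != cyc sigma f.+1]|.

(* Main.v *)
Require Import Defs.
From mathcomp Require Import all_boot all_order all_algebra.
From mathcomp Require Import ring lra zify.
Import Order.TTheory GRing.Theory Num.Theory.
Local Open Scope ring_scope.

Lemma sum_shift (N : nat) (F : nat -> int) c :
  (forall j, F (j + N)%N = F j) ->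
  \sum_(j < N) F (j + c)%N = \sum_(j < N) F j.
Proof.
move=> Fp; elim: c => [|c IH].
  by apply: eq_bigr => j _; rewrite addn0.
rewrite -IH.
have H2 := etrans (esym (big_ord_recl N (fun j : 'I_N.+1 => F (j + c)%N)))
    (big_ord_recr N (fun j : 'I_N.+1 => F (j + c)%N)).
have -> : \sum_(j < N) F (j + c.+1)%N = \sum_(i < N) F (lift ord0 i + c)%N.
  by apply: eq_bigr => i _; rewrite lift0 addSnnS addnS.
have E : F (N + c)%N = F (0 + c)%N by rewrite addnC Fp.
move: H2; rewrite /= E /= => H2.
have : F c + \sum_(i < N) F (lift ord0 i + c)%N - F c = \sum_(i < N) F (i + c)%N + F c - F c
  by rewrite H2.
by rewrite [F c + _]addrC !addrK.
Qed.


Lemma cyc_val {n} {sigma : 'I_n.+1 -> int} (i : 'I_n.+1) : cyc sigma i = sigma i.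
Proof. by rewrite /cyc modn_small ?ltn_ord // inord_val. Qed.

Lemma cycP {n} {sigma : 'I_n.+1 -> int} j : cyc sigma (j + n.+1) = cyc sigma j.
Proof. by rewrite /cyc modnDr. Qed.

Lemma cyc_addmod {n} {sigma : 'I_n.+1 -> int} j m :
  cyc sigma (j + m %% n.+1) = cyc sigma (j + m).
Proof. by rewrite /cyc modnDmr. Qed.

Definition Ee {n} (sigma : 'I_n.+1 -> int) (j : nat) : int :=
  if cyc sigma j.+1 == cyc sigma j then 0 else cyc sigma j.+1.
Definition aa {n} (sigma : 'I_n.+1 -> int) (m : nat) : int :=
  \sum_(j < n.+1) cyc sigma j * cyc sigma (j + m).
Definition zz {n} (sigma : 'I_n.+1 -> int) (m : nat) : int :=
  \sum_(j < n.+1) Ee sigma j * Ee sigma (j + m).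

Lemma EeP {n} {sigma : 'I_n.+1 -> int} j : Ee sigma (j + n.+1) = Ee sigma j.
Proof. by rewrite /Ee -addSn !cycP. Qed.

Lemma Ee_addmod {n} {sigma : 'I_n.+1 -> int} j m :
  Ee sigma (j + m %% n.+1) = Ee sigma (j + m).
Proof. by rewrite /Ee -!addSn !cyc_addmod. Qed.

Lemma aa_addmod {n} {sigma : 'I_n.+1 -> int} m : aa sigma (m %% n.+1) = aa sigma m.
Proof. by apply: eq_bigr => j _; rewrite cyc_addmod. Qed.

Lemma zz_addmod {n} {sigma : 'I_n.+1 -> int} m : zz sigma (m %% n.+1) = zz sigma m.
Proof. by apply: eq_bigr => j _; rewrite Ee_addmod. Qed.

Lemma spin_cyc {n} {sigma : 'I_n.+1 -> int} : spin_config sigma ->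
  forall j, cyc sigma j = 1 \/ cyc sigma j = -1.
Proof. by move=> H j; apply: H. Qed.

Lemma Dlem {n} {sigma : 'I_n.+1 -> int} : spin_config sigma ->
  forall j, cyc sigma j.+1 - cyc sigma j = 2 * Ee sigma j.
Proof.
move=> /spin_cyc H j; rewrite /Ee.
by case: (H j.+1) (H j) => -> [] ->.
Qed.

Lemma aa_diff {n} {sigma : 'I_n.+1 -> int} : spin_config sigma -> forall m,
  aa sigma m.+1 - aa sigma m = \sum_(j < n.+1) cyc sigma j * (2 * Ee sigma (j + m)).
Proof.
move=> Hs m; rewrite /aa -sumrB; apply: eq_bigr => j _.
by rewrite -Dlem // addnS -mulrBr.
Qed.

Lemma key {n} {sigma : 'I_n.+1 -> int} : spin_config sigma -> forall m,
  aa sigma (m + n) - 2 * aa sigma m + aa sigma m.+1 = - 4 * zz sigma m.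
Proof.
move=> Hs m.
have h1 := aa_diff Hs m.
have h2 := aa_diff Hs (m + n).
have e1 : aa sigma (m + n).+1 = aa sigma m.
  by apply: eq_bigr => j _; rewrite -addnS addnA cycP.
rewrite e1 in h2.
have e2 : \sum_(j < n.+1) cyc sigma j * (2 * Ee sigma (j + (m + n))) =
          \sum_(j < n.+1) cyc sigma j.+1 * (2 * Ee sigma (j + m)).
  rewrite -(@sum_shift n.+1 (fun j => cyc sigma j * (2 * Ee sigma (j + (m + n)))) 1).
    apply: eq_bigr => j _; rewrite addn1; congr (_ * (_ * _)).
    by rewrite (_ : (j.+1 + (m + n) = (j + m) + n.+1)%N) ?EeP //; lia.

  by move=> j; rewrite cycP -addnA (addnC n.+1) addnA EeP.
rewrite e2 in h2.
have -> : aa sigma (m + n) - 2 * aa sigma m + aa sigma m.+1 =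
   (aa sigma m.+1 - aa sigma m) - (aa sigma m - aa sigma (m + n)) by ring.
rewrite h1 h2 -sumrB /zz mulr_sumr; apply: eq_bigr => j _.
rewrite -mulrBl.
rewrite -opprB Dlem //.
ring.
Qed.


Lemma Ecase {n} {sigma : 'I_n.+1 -> int} : spin_config sigma ->
  forall j, Ee sigma j = 0 \/ Ee sigma j = 1 \/ Ee sigma j = -1.
Proof. by move=> /spin_cyc H j; rewrite /Ee; case: (H j.+1) (H j) => -> [] ->; auto. Qed.

Lemma sumE0 {n} {sigma : 'I_n.+1 -> int} : spin_config sigma ->
  \sum_(j < n.+1) Ee sigma j = 0.
Proof.
move=> Hs.
have : \sum_(j < n.+1) (cyc sigma j.+1 - cyc sigma j) = 0.
  rewrite sumrB.
  have -> : \sum_(j < n.+1) cyc sigma j.+1 = \sum_(j < n.+1) cyc sigma j.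
    rewrite -(@sum_shift n.+1 (cyc sigma) 1); last by move=> j; rewrite cycP.
    by apply: eq_bigr => j _; rewrite addn1.
  by rewrite subrr.
under eq_bigr do rewrite Dlem //.
rewrite -mulr_sumr => /eqP; rewrite mulf_eq0 => /orP [/eqP //|/eqP //].
Qed.

Lemma sumzz {n} {sigma : 'I_n.+1 -> int} : spin_config sigma ->
  \sum_(f < n.+1) zz sigma f = 0.
Proof.
move=> Hs; rewrite /zz exchange_big /=.
apply: big1 => j _.
rewrite -mulr_sumr.
rewrite (_ : \sum_(i < n.+1) Ee sigma (j + i) = 0) ?mulr0 //.
rewrite (eq_bigr (fun i : 'I_n.+1 => Ee sigma (i + j))); last by move=> i _; rewrite addnC.
by rewrite (@sum_shift n.+1 (Ee sigma) j) ?sumE0 // => i; rewrite EeP.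
Qed.

Lemma zz_sym {n} {sigma : 'I_n.+1 -> int} f : (f <= n.+1)%N ->
  zz sigma (n.+1 - f) = zz sigma f.
Proof.
move=> Hf; rewrite /zz.
rewrite -(@sum_shift n.+1 (fun j => Ee sigma j * Ee sigma (j + f)) (n.+1 - f)); last first.
  by move=> j; rewrite EeP -addnAC EeP.
apply: eq_bigr => j _; rewrite mulrC; congr (_ * _).
by rewrite -addnA subnK // EeP.
Qed.

Lemma zz_half {n} {sigma : 'I_n.+1 -> int} h : n.+1 = (h + h)%N ->
  (2 %| zz sigma h)%Z.
Proof.
move=> Hh; rewrite /zz.
rewrite -(big_mkord xpredT (fun j => Ee sigma j * Ee sigma (j + h))) Hh.
rewrite (big_cat_nat (n:=h)) ?leq_addr //=.
have E := big_addn 0 (h+h) h xpredT (fun j => Ee sigma j * Ee sigma (j + h)); rewrite addnK /= in E; rewrite E.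
have E2 : \sum_(0 <= i < h) Ee sigma (i + h) * Ee sigma (i + h + h) =
   \sum_(0 <= i < h) Ee sigma i * Ee sigma (i + h).
  by apply: eq_big_nat => i _; rewrite -addnA -Hh EeP mulrC.
rewrite E2 -mulr2n; apply/dvdzP; exists (\sum_(0 <= i < h) Ee sigma i * Ee sigma (i + h)).
by rewrite mulr2n; ring.
Qed.

Lemma absE {n} {sigma : 'I_n.+1 -> int} : spin_config sigma -> forall j,
  `|Ee sigma j| = (cyc sigma j.+1 != cyc sigma j)%:R.
Proof. by move=> /spin_cyc H j; rewrite /Ee; case: (H j.+1) (H j) => -> [] ->. Qed.

Lemma sum_absE {n} {sigma : 'I_n.+1 -> int} : spin_config sigma ->
  \sum_(j < n.+1) `|Ee sigma j| = (num_sign_changes sigma)%:R.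
Proof.
move=> Hs; under eq_bigr do rewrite absE //.
rewrite -natr_sum /num_sign_changes -sum1_card; congr (_%:R); rewrite [RHS]big_mkcond /=.
apply: eq_bigr => i _; rewrite inE cyc_val eq_sym.
by case: (sigma i != _).
Qed.

Lemma zz0 {n} {sigma : 'I_n.+1 -> int} : spin_config sigma ->
  zz sigma 0 = \sum_(j < n.+1) `|Ee sigma j|.
Proof.
move=> Hs; apply: eq_bigr => j _; rewrite addn0.
by case: (Ecase Hs j) => [->|[->|->]].
Qed.

Lemma dvd2_4 (x : int) : (2 %| x)%Z -> (4 %| x + x)%Z.
Proof. by move=> /dvdzP [q ->]; apply/dvdzP; exists q; ring. Qed.

Lemma sum_sym4 M (g : nat -> int) :
  (forall f, (f <= M)%N -> g (M - f)%N = g f) -> (forall f, (2 %| g f)%Z) ->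
  (~~ odd M -> (4 %| g M./2)%Z) -> (4 %| \sum_(i < M.+1) g i)%Z.
Proof.
elim/ltn_ind: M g => M IH g Hsym H2 Hmid.
case: M IH Hsym Hmid => [|[|M]] IH Hsym Hmid.
- by rewrite big_ord1; apply: Hmid.
- rewrite big_ord_recr big_ord1 /=.
  have := Hsym 0%N isT; rewrite subn0 /= => ->.
  exact: dvd2_4.
- rewrite big_ord_recl big_ord_recr /=.
  have e : g (bump 0 M.+1) = g 0%N.
    by rewrite /bump leq0n add1n -(Hsym 0%N isT) subn0.
  rewrite e.
  have IH' := IH M (leqW (leqnn M.+1)) (fun i => g i.+1).
  rewrite (eq_bigr (fun i : 'I_M.+1 => g i.+1)); last by move=> i _; rewrite /bump leq0n add1n.
  rewrite addrA (addrC (g 0%N)) -addrA.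
  apply: rpredD; last exact: dvd2_4.
  apply: IH' => //.
  + move=> f Hf /=; have -> : ((M - f).+1 = M.+2 - f.+1)%N by lia.
    exact: (Hsym f.+1 (leqW Hf)).
  + by move=> Ho; apply: Hmid; rewrite /= negbK.
Qed.

Lemma absB2 (x : int) : (2 %| `|x| - x)%Z.
Proof.
case: (lerP 0 x) => Hx.
  by rewrite ger0_norm // subrr dvdz0.
by rewrite ltr0_norm //; apply/dvdzP; exists (- x); ring.
Qed.

Lemma absB4 (x : int) : (2 %| x)%Z -> (4 %| `|x| - x)%Z.
Proof.
move=> /dvdzP [q ->]; case: (lerP 0 (q * 2)) => Hx.
  by rewrite ger0_norm // subrr dvdz0.
by rewrite ltr0_norm //; apply/dvdzP; exists (- q); ring.
Qed.

Lemma cyc_h {n} {sigma : 'I_n.+1 -> int} j :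
  cyc (fun f => (autocorr sigma f)%:~R : rat) j = (aa sigma j)%:~R.
Proof.
rewrite /cyc; congr (_%:~R).
rewrite /autocorr -(aa_addmod (sigma:=sigma) j) /aa.
apply: eq_bigr => i _; rewrite cyc_val inordK //.
by rewrite ltn_pmod.
Qed.

Lemma discLapE {n} {sigma : 'I_n.+1 -> int} : spin_config sigma -> forall f,
  discLap (fun f => (autocorr sigma f)%:~R) f = - (zz sigma f)%:~R.
Proof.
move=> Hs f; rewrite /discLap !cyc_h.
have -> : (autocorr sigma f)%:~R = (aa sigma f)%:~R :> rat.
  by congr (_%:~R); apply: eq_bigr => i _; rewrite cyc_val.
have := key Hs f; move/(congr1 (fun x : int => x%:~R : rat)).
rewrite /= ?intrD ?intrB ?intrM ?intrN ?intrD ?intrM => K.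
have H2 : (2%:~R : rat) = 2 by [].
have H1 : (1%:~R : rat) = 1 by [].
rewrite H2 !H1 in K.
by rewrite K; field.
Qed.

Lemma intr_sumE {n} (F : 'I_n.+1 -> int) :
  (\sum_(i < n.+1) F i)%:~R = \sum_(i < n.+1) (F i)%:~R :> rat.
Proof. by apply: (big_morph (fun x : int => x%:~R : rat) (@intrD _) (mulr0z 1)). Qed.

Lemma sum_sym4' N (g : nat -> int) :
  (forall f, (f < N)%N -> g (N - f)%N = g f.+1) -> (forall f, (2 %| g f)%Z) ->
  (forall h, N.+1 = (h + h)%N -> (4 %| g h)%Z) -> (4 %| \sum_(i < N) g i.+1)%Z.
Proof.
case: N => [|M] Hsym H2 Hmid; first by rewrite big_ord0 dvdz0.
apply: (@sum_sym4 M (fun i => g i.+1)) => //.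
- move=> f Hf /=; have -> : ((M - f).+1 = M.+1 - f)%N by lia.
  by apply: Hsym.
- move=> Ho; apply: Hmid.
  have := odd_double_half M; rewrite (negbTE Ho) add0n -addnn => HM.
  lia.
Qed.

Theorem mainTheorem10 (n k : nat) (sigma : 'I_n.+1 -> int) :
  spin_config sigma ->
  num_sign_changes sigma = (2 * k)%N ->
  let L := norm1 (discLap (fun f => (autocorr sigma f)%:~R)) in
  (4 * k)%:R <= L /\ L <= (4 * k ^ 2)%:R /\ exists m : int, L = 4 * m%:~R.
Proof.
move=> Hs Hk L.
set T := \sum_(f < n.+1) `|zz sigma f|.
have LT : L = T%:~R.
  rewrite /L /norm1 /T intr_sumE; apply: eq_bigr => f _.
  by rewrite discLapE // normrN intr_norm.
have Hz0 : zz sigma 0 = (2 * k)%:R by rewrite zz0 // sum_absE // Hk.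
have Hsum := sumzz Hs.
have Tsplit : T = `|zz sigma 0| + \sum_(i < n) `|zz sigma i.+1|.
  by rewrite /T big_ord_recl.
have Ssplit : \sum_(i < n) zz sigma i.+1 = - zz sigma 0.
  move: Hsum; rewrite big_ord_recl => /eqP; rewrite addrC addr_eq0 => /eqP <-.
  by [].
rewrite LT; split; [|split].
- have : (4 * k)%:R <= T.
    rewrite Tsplit.
    apply: le_trans (lerD (lexx _) (ler_norm_sum _ _ _)).
    rewrite Ssplit normrN Hz0 ger0_norm ?ler0n // -natrD ler_nat; lia.
  move=> H; change ((Posz (4 * k))%:~R <= T%:~R :> rat); rewrite ler_int; lia.
- have H : T <= (2 * k)%:R * (2 * k)%:R.
    rewrite /T; apply: (le_trans (y := \sum_(f < n.+1) \sum_(j < n.+1)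
        `|Ee sigma j| * `|Ee sigma (j + f)|)).
      apply: ler_sum => f _; rewrite /zz; apply: le_trans; first exact: ler_norm_sum.
      by apply: ler_sum => j _; rewrite normrM.
    rewrite exchange_big /= -Hk -sum_absE // mulr_suml; apply: ler_sum => j _.
    rewrite -mulr_sumr; apply: ler_wpM2l; first exact: normr_ge0.
    rewrite le_eqVlt; apply/orP; left; apply/eqP.
    rewrite (eq_bigr (fun i : 'I_n.+1 => `|Ee sigma (i + j)|)); last by move=> i _; rewrite addnC.
    by rewrite (@sum_shift n.+1 (fun i => `|Ee sigma i|) j) // => i; rewrite EeP.
  change (T%:~R <= (Posz (4 * k ^ 2))%:~R :> rat); rewrite ler_int.
  move: H; rewrite -natrM => H; apply: le_trans H _; nia.
- have D : (4 %| T)%Z.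
    have HT : T = \sum_(f < n.+1) (`|zz sigma f| - zz sigma f) by rewrite sumrB Hsum subr0.
    rewrite HT big_ord_recl /= Hz0 ger0_norm ?ler0n // subrr add0r.
    rewrite (eq_bigr (fun i : 'I_n => (fun m => `|zz sigma m| - zz sigma m) i.+1)); last first.
      by move=> i _; rewrite /bump leq0n add1n.
    apply: (@sum_sym4' n (fun m => `|zz sigma m| - zz sigma m)).
    + move=> f Hf /=; by rewrite -(zz_sym (n := n) (sigma := sigma) f.+1) ?(leqW Hf).
    + by move=> f; apply: absB2.
    + move=> h Hh; apply: absB4; exact: zz_half Hh.
  case/dvdzP: D => q ->; exists q; rewrite intrM mulrC; congr (_ * _).
Qed.
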